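(* Impose (A1)–(A6) and (A8), fix $x\in\mathcal X$ and $u\in[0,1]$, and write $\theta(x,u)=\mathbb E[Y_1^*\mid X=x,U=u,S_0=1,S_1=1]$. Then: (i) under (A7.1), $\underline y^*\le \theta(x,u)\le \dfrac{m_1^Y(x,u)-\underline y^*\,\Delta_S(x,u)}{m_0^S(x,u)}$; (ii) under (A7.2), $\dfrac{m_1^Y(x,u)-\overline y^*\,\Delta_S(x,u)}{m_0^S(x,u)}\le\theta(x,u)\le \overline y^*$; (iii) under (A7.3) (sub-case (a) or (b)), $\dfrac{m_1^Y(x,u)-\overline y^*\,\Delta_S(x,u)}{m_0^S(x,u)}\le\theta(x,u)\le\dfrac{m_1^Y(x,u)-\underline y^*\,\Delta_S(x,u)}{m_0^S(x,u)}$.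
   Context: Standing setup. On a common probability space: $X$ (covariates, support $\mathcal X$), $Z$ (instrument, support $\mathcal Z$), $W=(X,Z)$; latent real random variables $U,V$, jointly continuously distributed conditional on $X$, with $U\mid X$ and $V\mid X$ each Uniform$[0,1]$ (their joint dependence unrestricted); real potential outcomes of interest $Y_0^*,Y_1^*$. Given functions $P:\mathcal X\times\mathcal Z\to[0,1]$ and $Q:\{0,1\}\times\mathcal X\to[0,1]$, define the treatment $D=\mathbf 1\{P(W)\ge U\}$, potential selection indicators $S_d=\mathbf 1\{Q(d,X)\ge V\}$ ($d\in\{0,1\}$), selection indicator $S=DS_1+(1-D)S_0$, potential observable outcomes $Y_d=S_dY_d^*$ and observable outcome $Y=DY_1+(1-D)Y_0$. For $x\in\mathcal X$, $u\in[0,1]$, $d\in\{0,1\}$: $m_d^Y(x,u)=\mathbb E[Y_d\mid X=x,U=u]$, $m_d^S(x,u)=\mathbb E[S_d\mid X=x,U=u]$, $\Delta_S(x,u)=m_1^S(x,u)-m_0^S(x,u)$, and $\Delta^{OO}_{Y^*}(x,u)=\mathbb E[Y_1^*-Y_0^*\mid X=x,U=u,S_0=1,S_1=1]$. Ratios appearing are assumed well defined (nonzero denominators). Assumptions: (A1) $Z$ is independent of $(U,V,Y_0^*,Y_1^* )$ conditional on $X$; (A2) the distribution of $P(W)$ given $X$ is nondegenerate; (A3) $\mathbb E|Y_d^*|<\infty$ and $\mathbb E[(Y_d^* )^2]<\infty$ for $d=0,1$; (A4) $0<\mathbb P[D=1\mid X]<1$; (A5) $X$ is invariant to counterfactual manipulation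 of treatment; (A6) $Y_0^*$ and $Y_1^*$ have a common support $\mathcal Y^*\subseteq\mathbb R$; write $\underline y^*=\inf\mathcal Y^*\in\mathbb R\cup\{-\infty\}$ and $\overline y^*=\sup\mathcal Y^*\in\mathbb R\cup\{+\infty\}$, assumed known. Support cases: (A7.1) $\underline y^*>-\infty$, $\overline y^*=+\infty$, $\mathcal Y^*$ an interval; (A7.2) $\underline y^*=-\infty$, $\overline y^*<\infty$, $\mathcal Y^*$ an interval; (A7.3) $\underline y^*,\overline y^*$ both finite and either (a) $\mathcal Y^*$ is an interval or (b) $\underline y^*\in\mathcal Y^*$ and $\overline y^*\in\mathcal Y^*$. (A8) $Q(1,x)>Q(0,x)>0$ for all $x\in\mathcal X$. *)

(* Defs.v *)
From HB Require Import structures.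
From mathcomp Require Import all_boot all_order all_algebra.
From mathcomp Require Import all_classical all_reals all_analysis.
Set Implicit Arguments. Unset Strict Implicit. Unset Printing Implicit Defensive.
Import Order.TTheory GRing.Theory Num.Theory.
Import numFieldNormedType.Exports.
Local Open Scope classical_set_scope.
Local Open Scope ring_scope.

Section Model.
Context {R : realType} {d dx dz : measure_display}
  (Omega : measurableType d) (Xt : measurableType dx) (Zt : measurableType dz).

Definition indR (b : bool) : R := (b : nat)%:R.

Definition treat (Pf : Xt -> Zt -> R) (X : Omega -> Xt) (Z : Omega -> Zt)
  (U : Omega -> R) (w : Omega) : bool := U w <= Pf (X w) (Z w).

(* Potential selection S_d = 1{Q(d,X) >= V}; d = true is treatment 1. *)
Definition sel (Q : bool -> Xt -> R) (X : Omega -> Xt) (V : Omega -> R)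
  (dd : bool) (w : Omega) : bool := V w <= Q dd (X w).

Definition cond_prob_version (P : probability Omega R) (X : Omega -> Xt)
  (A : set Omega) (f : Xt -> R) : Prop :=
  measurable_fun setT f /\
  forall C : set Xt, measurable C ->
    P (A `&` (X @^-1` C)) = (\int[P]_(w in X @^-1` C) (f (X w))%:E)%E.

Definition cond_indep {dw} {Wt : measurableType dw} (P : probability Omega R)
  (X : Omega -> Xt) (Z : Omega -> Zt) (Wv : Omega -> Wt) : Prop :=
  forall (A : set Zt) (B : set Wt), measurable A -> measurable B ->
    exists f g : Xt -> R,
      [/\ cond_prob_version P X (Z @^-1` A) f,
          cond_prob_version P X (Wv @^-1` B) g &
          cond_prob_version P X ((Z @^-1` A) `&` (Wv @^-1` B)) (f \* g)].

Definition uniform_given (P : probability Omega R) (X : Omega -> Xt)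
  (U : Omega -> R) : Prop :=
  forall (t : R) (C : set Xt), 0 <= t <= 1 -> measurable C ->
    P ([set w | U w <= t] `&` (X @^-1` C)) = (t%:E * P (X @^-1` C))%E.

(* (U,V) jointly continuously distributed (conditional on X): the joint law
   of (U,V) is absolutely continuous w.r.t. Lebesgue measure on R^2
   (equivalent to a.s. absolute continuity of the conditional law given X). *)
Definition jointly_continuous (P : probability Omega R) (U V : Omega -> R)
  : Prop :=
  forall N : set (R * R), measurable N ->
    ((@lebesgue_measure R) \x (@lebesgue_measure R))%E N = 0%E ->
    P ((fun w => (U w, V w)) @^-1` N) = 0%E.

Definition rcd_given (P : probability Omega R) (X : Omega -> Xt)
  (U : Omega -> R) (k : R.-pker (Xt * R)%type ~> Omega) : Prop :=
  forall (A : set Omega) (B : set (Xt * R)), measurable A -> measurable B ->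
    P (A `&` ((fun w => (X w, U w)) @^-1` B)) =
    (\int[P]_(w in (fun w => (X w, U w)) @^-1` B) k (X w, U w) A)%E.

(* Pointwise conditional quantities, computed under mu = law given X=x,U=u. *)
Definition mY (mu : {measure set Omega -> \bar R}) (Q : bool -> Xt -> R)
  (X : Omega -> Xt) (V : Omega -> R) (Y : Omega -> R) (dd : bool) : R :=
  fine (\int[mu]_w (indR (sel Q X V dd w) * Y w)%:E)%E.

Definition mS (mu : {measure set Omega -> \bar R}) (Q : bool -> Xt -> R)
  (X : Omega -> Xt) (V : Omega -> R) (dd : bool) : R :=
  fine (mu [set w | sel Q X V dd w]).

Definition both_selected (Q : bool -> Xt -> R) (X : Omega -> Xt)
  (V : Omega -> R) : set Omega :=
  [set w | sel Q X V false w && sel Q X V true w].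

Definition theta (mu : {measure set Omega -> \bar R}) (Q : bool -> Xt -> R)
  (X : Omega -> Xt) (V : Omega -> R) (Y1 : Omega -> R) : R :=
  fine (\int[mu]_(w in both_selected Q X V) (Y1 w)%:E)%E /
  fine (mu (both_selected Q X V)).

End Model.

Definition ylow {R : realType} (Ys : set R) : \bar R :=
  ereal_inf [set y%:E | y in Ys].
Definition yhigh {R : realType} (Ys : set R) : \bar R :=
  ereal_sup [set y%:E | y in Ys].

(* Main.v *)
Require Import Defs.
From HB Require Import structures.
From mathcomp Require Import all_boot all_order all_algebra.
From mathcomp Require Import all_classical all_reals all_analysis.
Import Order.TTheory GRing.Theory Num.Theory.
Import numFieldNormedType.Exports.
Local Open Scope classical_set_scope.
Local Open Scope ring_scope.

From mathcomp Require Import lra.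

Section H.
Context (R : realType) (d : measure_display) (T : measurableType d)
  (mu : {measure set T -> \bar R}) (mu1 : mu setT = 1%E).

Lemma mu_fin A : measurable A -> mu A \is a fin_num.
Proof.
move=> mA; rewrite ge0_fin_numE ?measure_ge0//.
apply: (le_lt_trans (y := mu setT)); last by rewrite mu1 ltry.
by apply: le_measure; rewrite ?inE.
Qed.

Lemma cst_int A c : measurable A -> mu.-integrable A (EFin \o cst c).
Proof.
move=> mA; apply/integrableP; split; first by rewrite (_ : EFin \o cst c = cst c%:E)//; exact: measurable_cst.
rewrite (eq_integral (cst `|c|%:E)); last by move=> x _.
rewrite integral_cst //.
rewrite lte_mul_pinfty ?lee_fin //.
by rewrite -ge0_fin_numE ?measure_ge0 // mu_fin.
Qed.

Lemma lb_int A (f : T -> R) c : measurable A ->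
  mu.-integrable setT (EFin \o f) -> (forall x, c <= f x) ->
  c * fine (mu A) <= fine (\int[mu]_(x in A) (f x)%:E)%E.
Proof.
move=> mA hf cf.
have hfA : mu.-integrable A (EFin \o f) by apply: integrableS hf.
have := @le_integral _ _ _ mu A mA (EFin \o cst c) (EFin \o f) (cst_int A c mA) hfA.
move=> /(_ (fun x _ => ltac:(by rewrite /= lee_fin))).
rewrite (eq_integral (cst c%:E)); last by move=> x _.
rewrite integral_cst// => h.
rewrite -[c]/(fine c%:E) -fineM ?mu_fin //; apply: fine_le => //.
  by rewrite fin_numM // (mu_fin A mA).
exact: integrable_fin_num.
Qed.

Lemma ub_int A (f : T -> R) c : measurable A ->
  mu.-integrable setT (EFin \o f) -> (forall x, f x <= c) ->
  fine (\int[mu]_(x in A) (f x)%:E)%E <= c * fine (mu A).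
Proof.
move=> mA hf cf.
have hfA : mu.-integrable A (EFin \o f) by apply: integrableS hf.
have := @le_integral _ _ _ mu A mA (EFin \o f) (EFin \o cst c) hfA (cst_int A c mA).
move=> /(_ (fun x _ => ltac:(by rewrite /= lee_fin))).
rewrite [X in (_ <= X)%E](eq_integral (cst c%:E)); last by move=> x _.
rewrite integral_cst// => h.
rewrite -[c]/(fine c%:E) -fineM ?mu_fin //; apply: fine_le => //.
  exact: integrable_fin_num.
by rewrite fin_numM // (mu_fin A mA).
Qed.
End H.


Lemma alg_lb (R : realType) (l a c pA pC : R) : 0 < pA -> l * pA <= a -> l * pC <= c ->
  l <= a / pA /\ a / pA <= (a + c - l * ((pA + pC) - pA)) / pA.
Proof.
move=> p0 h1 h2; have pi : 0 <= pA^-1 by rewrite invr_ge0 ltW.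
split.
  rewrite -[l](mulfK (x:=pA)) ?gt_eqF //; exact: ler_wpM2r.
apply: ler_wpM2r => //; lra.
Qed.

Lemma alg_ub (R : realType) (l a c pA pC : R) : 0 < pA -> a <= l * pA -> c <= l * pC ->
  (a + c - l * ((pA + pC) - pA)) / pA <= a / pA /\ a / pA <= l.
Proof.
move=> p0 h1 h2; have pi : 0 <= pA^-1 by rewrite invr_ge0 ltW.
split.
  apply: ler_wpM2r => //; lra.
rewrite -[X in _ <= X](mulfK (x:=pA)) ?gt_eqF //; exact: ler_wpM2r.
Qed.

Theorem proposition1 (R : realType) (d dx dz : measure_display)
  (Omega : measurableType d) (Xt : measurableType dx) (Zt : measurableType dz)
  (P : probability Omega R)
  (X : Omega -> Xt) (Z : Omega -> Zt) (U V Y0 Y1 : Omega -> R)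
  (Pf : Xt -> Zt -> R) (Q : bool -> Xt -> R) (Ys : set R)
  (k : R.-pker (Xt * R)%type ~> Omega) (x : Xt) (u : R)
  (* random variables and index functions are measurable *)
  (mX : measurable_fun setT X) (mZ : measurable_fun setT Z)
  (mU : measurable_fun setT U) (mV : measurable_fun setT V)
  (mY0 : measurable_fun setT Y0) (mY1 : measurable_fun setT Y1)
  (mPf : measurable_fun setT (fun p : Xt * Zt => Pf p.1 p.2))
  (mQ : forall dd, measurable_fun setT (Q dd))
  (Pf01 : forall x' z', 0 <= Pf x' z' <= 1)
  (Q01 : forall dd x', 0 <= Q dd x' <= 1)
  (* latent variables *)
  (HUunif : uniform_given P X U) (HVunif : uniform_given P X V)
  (HUVcont : jointly_continuous P U V)
  (* (A1) *)
  (HA1 : cond_indep P X Z (fun w => (U w, V w, Y0 w, Y1 w)))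
  (* (A2) *)
  (HA2 : ~ exists c : Xt -> R, measurable_fun setT c /\
           P [set w | Pf (X w) (Z w) = c (X w)] = 1%E)
  (* (A3) *)
  (HA3 : [/\ P.-integrable setT (EFin \o Y0), P.-integrable setT (EFin \o Y1),
             P.-integrable setT (EFin \o (fun w => Y0 w ^+ 2)) &
             P.-integrable setT (EFin \o (fun w => Y1 w ^+ 2))])
  (* (A4) *)
  (HA4 : exists p : Xt -> R,
           cond_prob_version P X [set w | treat Pf X Z U w] p /\
           {ae P, forall w, 0 < p (X w) < 1})
  (* (A6): Y0*, Y1* take values in the common support Ys *)
  (HA6 : forall w, Ys (Y0 w) /\ Ys (Y1 w))
  (* (A8) *)
  (HA8 : forall x', Q true x' > Q false x' /\ Q false x' > 0)
  (* k is a regular conditional distribution given (X,U) *)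
  (Hk : rcd_given P X U k)
  (Hu : 0 <= u <= 1)
  (* the conditional quantities at (x,u) are well defined *)
  (Hint0 : (k (x, u)).-integrable setT (EFin \o Y0))
  (Hint1 : (k (x, u)).-integrable setT (EFin \o Y1))
  (HmS0 : mS (k (x, u)) Q X V false != 0)
  (Hboth : fine (k (x, u) (both_selected Q X V)) != 0) :
  let mu := k (x, u) in
  let th := theta mu Q X V Y1 in
  let m1Y := mY mu Q X V Y1 true in
  let m0S := mS mu Q X V false in
  let DS := mS mu Q X V true - mS mu Q X V false in
  let lo := ylow Ys in
  let hi := yhigh Ys in
  [/\ (* (i) under (A7.1) *)
      (lo \is a fin_num -> hi = +oo%E -> is_interval Ys ->
         fine lo <= th /\ th <= (m1Y - fine lo * DS) / m0S),
      (* (ii) under (A7.2) *)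
      (lo = -oo%E -> hi \is a fin_num -> is_interval Ys ->
         (m1Y - fine hi * DS) / m0S <= th /\ th <= fine hi) &
      (* (iii) under (A7.3)(a) or (b) *)
      (lo \is a fin_num -> hi \is a fin_num ->
         (is_interval Ys \/ (Ys (fine lo) /\ Ys (fine hi))) ->
         (m1Y - fine hi * DS) / m0S <= th /\
         th <= (m1Y - fine lo * DS) / m0S)].
Proof.
cbv zeta.
have mu1 : k (x, u) setT = 1%E := @prob_kernel _ _ _ _ _ k (x, u).
pose S := fun dd => [set w | sel Q X V dd w].
have mSd dd : measurable (S dd).
  have := measurable_realfun.measurable_fun_ler (D:=setT) mV
    (measurableT_comp (mQ dd) mX) measurableT (Y:=[set true]) I.
  by rewrite setTI.
have sub : S false `<=` S true.
  move=> w; rewrite /S /sel /= => h; apply: le_trans h _; exact: ltW (HA8 _).1.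
have Eboth : both_selected Q X V = S false.
  apply/seteqP; split => w; rewrite /both_selected /=.
    by move=> /andP[].
  by move=> h; rewrite h (sub _ h).
pose C := S true `\` S false.
have mC : measurable C by apply: measurableD.
have mu_f := @mu_fin _ _ _ _ mu1.
have Hint1' : forall A, measurable A -> (k (x, u)).-integrable A (EFin \o Y1).
  by move=> A mA; apply: integrableS Hint1.
have HmS1 : mS (k (x, u)) Q X V true = fine (k (x,u) (S false)) + fine (k (x,u) C).
  rewrite /mS -fineD ?mu_f // -measureU // ?setDUK // setDIK //.
have Hm1Y : mY (k (x, u)) Q X V Y1 true =
  fine (\int[k (x, u)]_(w in S false) (Y1 w)%:E)%E +
  fine (\int[k (x, u)]_(w in C) (Y1 w)%:E)%E.
  rewrite -fineD; [|exact: integrable_fin_num (Hint1' _ (mSd false))|exact: integrable_fin_num (Hint1' _ mC)].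
  rewrite -integral_setU //; last 2 first.
  - by rewrite setDUK //; exact: measurable_int (Hint1' _ (mSd true)).
  - by rewrite /disj_set setDIK.
  rewrite setDUK // /mY [in RHS]integral_mkcond; congr fine; apply: eq_integral => w _.
  rewrite /patch /indR; case: (boolP (sel Q X V true w)) => h.
    by rewrite mem_set // mul1r.
  by rewrite memNset ?mul0r //; apply/negP.
have Hth : theta (k (x, u)) Q X V Y1 =
  fine (\int[k (x, u)]_(w in S false) (Y1 w)%:E)%E / fine (k (x,u) (S false)).
  by rewrite /theta Eboth.
have Hm0 : mS (k (x, u)) Q X V false = fine (k (x,u) (S false)) by [].
have pA0 : 0 < fine (k (x,u) (S false)).
  by rewrite lt_def -Hm0 HmS0 /= fine_ge0 // measure_ge0.
have lo_le : ylow Ys \is a fin_num -> forall w, fine (ylow Ys) <= Y1 w.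
  move=> lof w; rewrite -lee_fin fineK //; apply: ereal_inf_lbound.
  by exists (Y1 w) => //; exact: (HA6 w).2.
have hi_le : yhigh Ys \is a fin_num -> forall w, Y1 w <= fine (yhigh Ys).
  move=> hif w; rewrite -lee_fin fineK //; apply: ereal_sup_ubound.
  by exists (Y1 w) => //; exact: (HA6 w).2.
rewrite Hth Hm1Y HmS1 Hm0.
have LB : ylow Ys \is a fin_num -> _ := fun lof =>
  @alg_lb _ _ _ _ _ _ pA0 (@lb_int _ _ _ _ mu1 _ _ _ (mSd false) Hint1 (lo_le lof))
             (@lb_int _ _ _ _ mu1 _ _ _ mC Hint1 (lo_le lof)).
have UB : yhigh Ys \is a fin_num -> _ := fun hif =>
  @alg_ub _ _ _ _ _ _ pA0 (@ub_int _ _ _ _ mu1 _ _ _ (mSd false) Hint1 (hi_le hif))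
             (@ub_int _ _ _ _ mu1 _ _ _ mC Hint1 (hi_le hif)).
split.
- by move=> lof _ _; exact: LB.
- by move=> _ hif _; have [? ?] := UB hif.
- move=> lof hif _; have [? ?] := UB hif; have [? ?] := LB lof; split => //.
Qed.
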